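(* Let $\mathcal X,\mathcal W$ be measurable spaces, $\mathcal Z=\mathcal X\times\mathcal W$, and let $(X,W,Y)$ have a joint distribution on $\mathcal X\times\mathcal W\times\mathbb R$ with $\mathbb E[Y^2]<\infty$; write $Z=(X,W)$. Let $n,m\ge 1$ be integers, $N=n+m$, and $\lambda\ge 0$. Let $\mathcal F\subset L^2(P_X)$ and $\mathcal G\subset L^2(P_Z)$ be nonempty closed convex sets, where each $f:\mathcal X\to\mathbb R$ is identified with its lift $(x,w)\mapsto f(x)$ on $\mathcal Z$. Define the population loss $$\mathcal{L}(f,g;\lambda)=\frac{n}{N}\mathbb{E}[(Y-f(X))^2]+\frac{m}{N}\mathbb{E}[(g(Z)-f(X))^2]+\lambda\frac{n}{N}\mathbb{E}[(Y-g(Z))^2],$$ and let $\mu(x)=\mathbb E[Y\mid X=x]$ and $\eta(z)=\mathbb E[Y\mid Z=z]$. Then any $(f^\star,g^\star)\in\mathcal F\times\mathcal G$ minimizing $\mathcal L(\cdot,\cdot;\lambda)$ over $\mathcal F\times\mathcal G$ satisfies $$f^\star=\Pi_{\mathcal{F}}\left(\frac{n}{N} \mu+\frac{m}{N}\mathbb{E}[g^\star(Z)\mid X=\cdot\,]\right),\qquad g^\star=\Pi_{\mathcal{G}}\left(\frac{m}{m+n\lambda} f^\star+\frac{n\lambda}{m+n\lambda}\eta\right).$$ Furthermore, if $\mu\in\mathcal F$, $\mu\in\mathcal G$ (via its lift) and $\eta\in\mathcal G$, then $$f^\star=\mu\quad\text{and}\quad g^\star=\frac{m}{m+n\lambda}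\mu+\frac{n\lambda}{m+n\lambda}\eta.$$
   Context: $\Pi_{\mathcal F}$ denotes the metric projection onto $\mathcal F$ in $L^2(P_X)$ (i.e. $\Pi_{\mathcal F}h\in\arg\min_{c\in\mathcal F}\mathbb E[(h(X)-c(X))^2]$), and $\Pi_{\mathcal G}$ the metric projection onto $\mathcal G$ in $L^2(P_Z)$. Here $P_X$, $P_Z$ are the marginal laws of $X$ and $Z$. *)

(* Defs.v *)
From HB Require Import structures.
From mathcomp Require Import all_boot all_order all_algebra.
From mathcomp Require Import all_classical all_reals all_analysis.
Set Implicit Arguments. Unset Strict Implicit. Unset Printing Implicit Defensive.
Import Order.TTheory GRing.Theory Num.Theory.
Local Open Scope classical_set_scope.
Local Open Scope ring_scope.

Section Defs.
Context {R : realType} {dO : measure_display} {Omega : measurableType dO}.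
Variable P : probability Omega R.

Definition expect (V : Omega -> R) : \bar R := (\int[P]_w (V w)%:E)%E.

Definition inL2 {d} {T : measurableType d} (Xr : Omega -> T) (h : T -> R) : Prop :=
  measurable_fun setT h /\ (expect (fun w => (h (Xr w) ^+ 2)%R) < +oo)%E.

Definition dist2 {d} {T : measurableType d} (Xr : Omega -> T) (h c : T -> R) : \bar R :=
  expect (fun w => ((h (Xr w) - c (Xr w)) ^+ 2)%R).

Definition is_proj {d} {T : measurableType d} (Xr : Omega -> T) (C : set (T -> R))
  (h c : T -> R) : Prop :=
  C c /\ forall c', C c' -> (dist2 Xr h c <= dist2 Xr h c')%E.

Definition is_cond_exp {d} {T : measurableType d} (Xr : Omega -> T) (V : Omega -> R)
  (h : T -> R) : Prop :=
  [/\ measurable_fun setT h,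
      P.-integrable setT (fun w => (h (Xr w))%:E) &
      forall A : set T, measurable A ->
        (\int[P]_(w in Xr @^-1` A) (V w)%:E = \int[P]_(w in Xr @^-1` A) (h (Xr w))%:E)%E].

Definition subL2 {d} {T : measurableType d} (Xr : Omega -> T) (C : set (T -> R)) : Prop :=
  forall c, C c -> inL2 Xr c.

Definition L2closed {d} {T : measurableType d} (Xr : Omega -> T) (C : set (T -> R)) : Prop :=
  forall (u : nat -> T -> R) (f : T -> R),
    (forall k, C (u k)) -> inL2 Xr f ->
    (fun k => dist2 Xr (u k) f) @ \oo --> (0 : \bar R)%E -> C f.

Definition fconvex {T : Type} (C : set (T -> R)) : Prop :=
  forall f g (t : R), C f -> C g -> 0 <= t -> t <= 1 ->
    C (fun x => t * f x + (1 - t) * g x).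

End Defs.

(* Main.v *)
Require Import Defs.
From HB Require Import structures.
From mathcomp Require Import all_boot all_order all_algebra.
From mathcomp Require Import all_classical all_reals all_analysis.
Import Order.TTheory GRing.Theory Num.Theory.
Local Open Scope classical_set_scope.
Local Open Scope ring_scope.
From mathcomp Require Import measurable_realfun ring lra.
Import HBNNSimple.

Section Helpers.
Context {R : realType} {dO : measure_display} {Omega : measurableType dO}.
Variable P : probability Omega R.

Lemma transfer_simple {d} {T : measurableType d} (Xr : Omega -> T)
  (mXr : measurable_fun setT Xr) (del : Omega -> R) (mdel : measurable_fun setT del)
  (del0 : forall w, 0 <= del w) (s : {nnsfun T >-> R}) :
  (\int[P]_w ((s (Xr w))%:E * (del w)%:E) =
   \sum_(y \in range s) y%:E * \int[P]_(w in Xr @^-1` (s @^-1` [set y])) (del w)%:E)%E.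
Proof.
transitivity (\int[P]_w (\sum_(y \in range s)
    (y * \1_(s @^-1` [set y]) (Xr w))%:E * (del w)%:E))%E.
  apply: eq_integral => w _.
  rewrite -ge0_mule_fsuml => [|y]; last exact: nnfun_muleindic_ge0.
  by rewrite fsumEFin // -(fimfunE _ (Xr w)).
rewrite ge0_integral_fsum//; last 2 first.
  - move=> y; apply: emeasurable_funM; last exact/measurable_EFinP.
    apply/measurable_EFinP; apply: measurable_funM => //.
    apply: measurableT_comp => //.
  - by move=> y w _; rewrite mule_ge0 ?nnfun_muleindic_ge0 ?lee_fin.
apply: eq_fsbigr => y yr.
under eq_integral do rewrite EFinM -muleA.
rewrite ge0_integralZl//.
- congr (_ * _)%E; rewrite [RHS]integral_mkcond; apply: eq_integral => w _.
  rewrite epatch_indic /= muleC; congr (_ * _)%E; rewrite /indic /=.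
- apply: emeasurable_funM; apply/measurable_EFinP => //.
  apply: measurableT_comp => //.
- by move=> w _; rewrite mule_ge0 ?lee_fin.
- by move: yr; rewrite inE => -[t _ <-]; rewrite lee_fin.
Qed.

Lemma transfer_ge0 {d} {T : measurableType d} (Xr : Omega -> T)
  (mXr : measurable_fun setT Xr) (del1 del2 : Omega -> R)
  (mdel1 : measurable_fun setT del1) (mdel2 : measurable_fun setT del2)
  (del10 : forall w, 0 <= del1 w) (del20 : forall w, 0 <= del2 w)
  (H : forall A, measurable A ->
     (\int[P]_(w in Xr @^-1` A) (del1 w)%:E = \int[P]_(w in Xr @^-1` A) (del2 w)%:E)%E)
  (phi : T -> R) (mphi : measurable_fun setT phi) (phi0 : forall x, 0 <= phi x) :
  (\int[P]_w ((phi (Xr w))%:E * (del1 w)%:E) =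
   \int[P]_w ((phi (Xr w))%:E * (del2 w)%:E))%E.
Proof.
have mEphi : measurable_fun setT (EFin \o phi) by exact/measurable_EFinP.
pose s := nnsfun_approx measurableT mEphi.
have key (del : Omega -> R) : measurable_fun setT del -> (forall w, 0 <= del w) ->
    (\int[P]_w ((phi (Xr w))%:E * (del w)%:E) =
     limn (fun n => \int[P]_w ((s n (Xr w))%:E * (del w)%:E)))%E.
  move=> mdel del0.
  rewrite -monotone_convergence//.
  - apply: eq_integral => w _; apply/esym/cvg_lim => //.
    apply: cvgeZr => //.
    have := @cvg_nnsfun_approx _ _ _ setT measurableT (EFin \o phi) mEphi.
    by apply => // x _; rewrite lee_fin.
  - move=> n; apply: emeasurable_funM; apply/measurable_EFinP => //.
    exact: measurableT_comp.
  - by move=> n w _; rewrite mule_ge0 ?lee_fin.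
  - move=> w _ a b ab; rewrite lee_wpmul2r ?lee_fin//.
    exact/lefP/nd_nnsfun_approx.
rewrite (key del1)// (key del2)//; congr (limn _); apply/funext => n.
rewrite !transfer_simple//; apply: eq_fsbigr => y _; rewrite H//.
Qed.

Lemma pos_mul (x y : R) : Num.max (x*y) 0 = Num.max x 0 * Num.max y 0 + Num.max (-x) 0 * Num.max (-y) 0.
Proof.
rewrite !maxEle.
case: (leP x 0) => hx; case: (leP y 0) => hy; case: (leP (x*y) 0) => hxy;
 case: (leP (-x) 0) => hnx; case: (leP (-y) 0) => hny; nra.
Qed.
Lemma neg_mul (x y : R) : Num.max (-(x*y)) 0 = Num.max x 0 * Num.max (-y) 0 + Num.max (-x) 0 * Num.max y 0.
Proof.
rewrite !maxEle.
case: (leP x 0) => hx; case: (leP y 0) => hy; case: (leP (-(x*y)) 0) => hxy;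
 case: (leP (-x) 0) => hnx; case: (leP (-y) 0) => hny; nra.
Qed.

Lemma mpos {d} {T : measurableType d} (f : T -> R) : measurable_fun setT f ->
  measurable_fun setT (fun x => Num.max (f x) 0).
Proof. by move=> mf; apply: (measurable_maxr (g:=cst 0)). Qed.
Lemma mneg {d} {T : measurableType d} (f : T -> R) : measurable_fun setT f ->
  measurable_fun setT (fun x => Num.max (- f x) 0).
Proof.
move=> mf; apply: (measurable_maxr (g:=cst 0)) => //.
exact: measurableT_comp.
Qed.

Lemma ce_zero {d} {T : measurableType d} (Xr : Omega -> T)
  (mXr : measurable_fun setT Xr) (D : Omega -> R) (mD : measurable_fun setT D)
  (iD : P.-integrable setT (EFin \o D))
  (HD : forall A, measurable A -> (\int[P]_(w in Xr @^-1` A) (D w)%:E = 0)%E)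
  (phi : T -> R) (mphi : measurable_fun setT phi)
  (iphiD : P.-integrable setT (fun w => (phi (Xr w) * D w)%:E)) :
  (\int[P]_w (phi (Xr w) * D w)%:E = 0)%E.
Proof.
pose Dp w := Num.max (D w) 0. pose Dn w := Num.max (- D w) 0.
pose pp x := Num.max (phi x) 0. pose pn x := Num.max (- phi x) 0.
have mDp : measurable_fun setT Dp by exact: mpos.
have mDn : measurable_fun setT Dn by exact: mneg.
have mpp : measurable_fun setT pp by exact: mpos.
have mpn : measurable_fun setT pn by exact: mneg.
have Dp0 w : 0 <= Dp w by rewrite /Dp le_max lexx orbT.
have Dn0 w : 0 <= Dn w by rewrite /Dn le_max lexx orbT.
have pp0 x : 0 <= pp x by rewrite /pp le_max lexx orbT.
have pn0 x : 0 <= pn x by rewrite /pn le_max lexx orbT.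
have H A : measurable A -> (\int[P]_(w in Xr @^-1` A) (Dp w)%:E =
                             \int[P]_(w in Xr @^-1` A) (Dn w)%:E)%E.
  move=> mA; have mS : measurable (Xr @^-1` A).
    by rewrite -[_ @^-1` _]setTI; exact: mXr.
  have iS : P.-integrable (Xr @^-1` A) (EFin \o D) by exact: integrableS iD.
  have := HD A mA; rewrite integralE.
  have -> : ((EFin \o D)^\+ = fun w => (Dp w)%:E)%E.
    by apply/funext => w; rewrite funeposE /Dp EFin_max.
  have -> : ((EFin \o D)^\- = fun w => (Dn w)%:E)%E.
    by apply/funext => w; rewrite funenegE /Dn EFin_max.
  move=> h0.
  have f1 : (\int[P]_(w in Xr @^-1` A) (Dn w)%:E)%E \is a fin_num.
    have := integrable_neg_fin_num mS iS.
    suff -> : ((EFin \o D)^\- = fun w => (Dn w)%:E)%E by [].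
    by apply/funext => w; rewrite funenegE /Dn EFin_max.
  by rewrite -[LHS](subeK _ f1) h0 add0e.
have T1 := @transfer_ge0 _ _ Xr mXr Dp Dn mDp mDn Dp0 Dn0 H pp mpp pp0.
have T2 := @transfer_ge0 _ _ Xr mXr Dp Dn mDp mDn Dp0 Dn0 H pn mpn pn0.
rewrite integralE.
have Ep : ((fun w => (phi (Xr w) * D w)%:E)^\+ = fun w =>
    (pp (Xr w))%:E * (Dp w)%:E + (pn (Xr w))%:E * (Dn w)%:E)%E.
  apply/funext => w; rewrite funeposE -EFin_max pos_mul.
  by rewrite EFinD !EFinM.
have En : ((fun w => (phi (Xr w) * D w)%:E)^\- = fun w =>
    (pp (Xr w))%:E * (Dn w)%:E + (pn (Xr w))%:E * (Dp w)%:E)%E.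
  apply/funext => w; rewrite funenegE -EFinN -EFin_max neg_mul.
  by rewrite EFinD !EFinM.
have fin := integrable_neg_fin_num measurableT iphiD.
rewrite En in fin.
rewrite Ep En.
have mM (a : T -> R) (b : Omega -> R) : measurable_fun setT a -> measurable_fun setT b ->
    measurable_fun setT (fun w => (a (Xr w))%:E * (b w)%:E)%E.
  move=> ma mb; apply: emeasurable_funM; apply/measurable_EFinP => //.
  exact: measurableT_comp.
rewrite ge0_integralD//; try solve [by move=> w _; rewrite mule_ge0 ?lee_fin | exact: mM].
rewrite T1 -T2 -ge0_integralD//; try solve [by move=> w _; rewrite mule_ge0 ?lee_fin | exact: mM].
rewrite subee//.
Qed.

Definition L2 (U : Omega -> R) := U \in Lfun P 2%:E.

Lemma L2E U : measurable_fun setT U ->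
  L2 U <-> (\int[P]_w (U w ^+ 2)%:E < +oo)%E.
Proof.
move=> mU.
have E : ('N[P]_2%:E[EFin \o U] `^ 2 = \int[P]_w (U w ^+ 2)%:E)%E.
  rewrite poweR_Lnorm//; apply: eq_integral => w _ /=.
  by rewrite powR_mulrn// -normrX ger0_norm// sqr_ge0.
rewrite /L2 inE; split.
- case/andP => _; rewrite inE /= /finite_norm => h; rewrite -E; exact: poweR_lty.
- move=> h; apply/andP; split; first by rewrite inE.
  rewrite inE /= /finite_norm; apply: (@lty_poweRy _ _ 2) => //; by rewrite E.
Qed.

Lemma L2_meas {U} : L2 U -> measurable_fun setT U.
Proof. by rewrite /L2 inE => /andP[]; rewrite inE. Qed.

Lemma L2_fin {U} : L2 U -> (\int[P]_w (U w ^+ 2)%:E < +oo)%E.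
Proof. by move=> h; exact: ((@L2E U (L2_meas h)).1 h). Qed.

Lemma L2D {U V} : L2 U -> L2 V -> L2 (fun w => U w + V w).
Proof. by move=> hU hV; have := rpredD hU hV; move=> h; exact: (h (lee1n 2)). Qed.

Lemma L2Z {k U} : L2 U -> L2 (fun w => k * U w).
Proof.
move=> hU; have h1 : (1 <= 2 :> R) by rewrite ler1n.
have -> : (fun w => k * U w) = k \o* U by apply/funext => w /=; rewrite mulrC.
exact: (@Lfun_scale _ _ _ P U k 2 h1 hU).
Qed.

Lemma L2N {U} : L2 U -> L2 (fun w => - U w).
Proof.
move=> hU; have := L2Z (k:=-1) hU.
by have -> : (fun w => -1 * U w) = (fun w => - U w) by apply/funext => w; rewrite mulN1r.
Qed.

Lemma L2B {U V} : L2 U -> L2 V -> L2 (fun w => U w - V w).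
Proof. by move=> hU hV; apply: L2D => //; exact: L2N. Qed.

Lemma L2_cst k : L2 (fun _ => k).
Proof. exact: Lfun_cst. Qed.

Lemma L2_int {U V} : L2 U -> L2 V -> P.-integrable setT (fun w => (U w * V w)%:E).
Proof. by move=> hU hV; apply/Lfun1_integrable; exact: Lfun2_mul_Lfun1. Qed.

Lemma L2_int1 {U} : L2 U -> P.-integrable setT (EFin \o U).
Proof.
move=> hU; have -> : EFin \o U = (fun w => (U w * 1)%:E).
  by apply/funext => w /=; rewrite mulr1.
exact: (L2_int hU (L2_cst 1)).
Qed.

Definition ip (U V : Omega -> R) : R := fine (\int[P]_w (U w * V w)%:E).

Lemma ipE {U V} : L2 U -> L2 V -> (\int[P]_w (U w * V w)%:E)%E = (ip U V)%:E.
Proof. by move=> hU hV; rewrite fineK// integrable_fin_num//; exact: L2_int. Qed.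

Lemma ip_sq {U} : L2 U -> expect P (fun w => U w ^+ 2) = (ip U U)%:E.
Proof.
move=> hU; rewrite -ipE//; rewrite /expect; apply: eq_integral => w _; rewrite expr2.

Qed.

Lemma ipC U V : ip U V = ip V U.
Proof. by rewrite /ip; congr fine; apply: eq_integral => w _; rewrite mulrC. Qed.

Lemma ipDl {U V W} : L2 U -> L2 V -> L2 W ->
  ip (fun w => U w + V w) W = ip U W + ip V W.
Proof.
move=> hU hV hW; apply: EFin_inj; rewrite EFinD -!ipE//; last exact: L2D.
under eq_integral do rewrite mulrDl EFinD.
by rewrite integralD//; exact: L2_int.
Qed.

Lemma ipZl {k U W} : L2 U -> L2 W -> ip (fun w => k * U w) W = k * ip U W.
Proof.
move=> hU hW; apply: EFin_inj; rewrite EFinM -!ipE//; last exact: L2Z.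
under eq_integral do rewrite -mulrA EFinM.
by rewrite integralZl//; exact: L2_int.
Qed.

Lemma ipNl {U W} : L2 U -> L2 W -> ip (fun w => - U w) W = - ip U W.
Proof.
move=> hU hW; rewrite -mulN1r -ipZl//; rewrite /ip; congr fine.
by apply: eq_integral => w _; rewrite mulN1r.
Qed.

Lemma ipBl {U V W} : L2 U -> L2 V -> L2 W ->
  ip (fun w => U w - V w) W = ip U W - ip V W.
Proof. by move=> hU hV hW; rewrite ipDl ?ipNl//; exact: L2N. Qed.

Lemma ip_ge0 U : 0 <= ip U U.
Proof.
by rewrite /ip fine_ge0// integral_ge0// => w _; rewrite lee_fin -expr2 sqr_ge0.
Qed.

Lemma ip_eq0 {U} : L2 U -> ip U U = 0 -> {ae P, forall w, U w = 0}.
Proof.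
move=> hU h0.
have : (\int[P]_w `|(U w ^+ 2)%:E| = 0)%E.
  rewrite -[RHS](_ : (0%R)%:E = 0)// -h0 -ipE//; apply: eq_integral => w _.
  by rewrite gee0_abs ?lee_fin ?sqr_ge0// expr2.
have m2 : measurable_fun setT (fun w => (U w ^+ 2)%:E).
  by apply/measurable_EFinP; exact: measurable_funX (L2_meas hU).
move/(ae_eq_integral_abs P measurableT m2).
apply: filterS => w /(_ I) /eqP; rewrite eqe sqrf_eq0 => /eqP //.
Qed.

Lemma ipDr {U V W} : L2 U -> L2 V -> L2 W ->
  ip W (fun w => U w + V w) = ip W U + ip W V.
Proof. by move=> hU hV hW; rewrite ipC ipDl// (ipC U) (ipC V). Qed.

Lemma ipZr {k U W} : L2 U -> L2 W -> ip W (fun w => k * U w) = k * ip W U.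
Proof. by move=> hU hW; rewrite ipC ipZl// ipC. Qed.

Lemma ipNr {U W} : L2 U -> L2 W -> ip W (fun w => - U w) = - ip W U.
Proof. by move=> hU hW; rewrite ipC ipNl// ipC. Qed.

Lemma ipBr {U V W} : L2 U -> L2 V -> L2 W ->
  ip W (fun w => U w - V w) = ip W U - ip W V.
Proof. by move=> hU hV hW; rewrite ipC ipBl// (ipC U) (ipC V). Qed.

Lemma ip_sub_sq U V : L2 U -> L2 V ->
  ip (fun w => U w - V w) (fun w => U w - V w) = ip U U - 2 * ip U V + ip V V.
Proof.
move=> hU hV; rewrite ipBl ?ipBr//; last exact: L2B.
rewrite (ipC V U); lra.
Qed.

Lemma setint_lin (S : set Omega) (mS : measurable S) (f1 f2 : Omega -> R) (a b : R) :
  P.-integrable setT (EFin \o f1) -> P.-integrable setT (EFin \o f2) ->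
  (\int[P]_(w in S) (a * f1 w + b * f2 w)%:E =
   a%:E * \int[P]_(w in S) (f1 w)%:E + b%:E * \int[P]_(w in S) (f2 w)%:E)%E.
Proof.
move=> i1 i2.
have j1 : P.-integrable S (EFin \o f1) by exact: integrableS i1.
have j2 : P.-integrable S (EFin \o f2) by exact: integrableS i2.
under eq_integral do rewrite EFinD !EFinM.
rewrite integralD//; last 2 first.
  - by apply: integrableZl.
  - by apply: integrableZl.
by rewrite !integralZl.
Qed.

Lemma ce_ip {d} {T : measurableType d} (Xr : Omega -> T) (mXr : measurable_fun setT Xr)
  (V : Omega -> R) (h phi : T -> R) :
  L2 V -> measurable_fun setT h -> L2 (fun w => h (Xr w)) ->
  measurable_fun setT phi -> L2 (fun w => phi (Xr w)) ->
  (forall A, measurable A ->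
    (\int[P]_(w in Xr @^-1` A) (V w)%:E = \int[P]_(w in Xr @^-1` A) (h (Xr w))%:E)%E) ->
  ip (fun w => phi (Xr w)) V = ip (fun w => phi (Xr w)) (fun w => h (Xr w)).
Proof.
move=> LV mh Lh mphi Lphi HA.
have LD : L2 (fun w => V w - h (Xr w)) by exact: L2B.
apply/eqP; rewrite -subr_eq0 -ipBr//; apply/eqP.
have := @ce_zero _ _ Xr mXr (fun w => V w - h (Xr w)) (L2_meas LD) (L2_int1 LD) _ phi mphi
  (L2_int Lphi LD).
rewrite /ip => ->//.
move=> A mA.
have mS : measurable (Xr @^-1` A) by rewrite -[_ @^-1` _]setTI; exact: mXr.
have := @setint_lin (Xr @^-1` A) mS V (fun w => h (Xr w)) 1 (-1) (L2_int1 LV) (L2_int1 Lh).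
under eq_integral do rewrite mul1r mulN1r.
move=> ->; rewrite HA.
have fx : (\int[P]_(w in Xr @^-1` A) (h (Xr w))%:E)%E \is a fin_num.
  by apply: integrable_fin_num => //; apply: integrableS (L2_int1 Lh).
by rewrite -(fineK fx) -!EFinM -EFinD mul1r mulN1r subrr.
exact: mA.
Qed.
End Helpers.

Ltac l2 := repeat first [assumption | apply: L2D | apply: L2B | apply: L2Z | apply: L2N].

Theorem theorem2p1 (R : realType) (dO : measure_display) (Omega : measurableType dO)
  (P : probability Omega R)
  (dX : measure_display) (TX : measurableType dX)
  (dW : measure_display) (TW : measurableType dW)
  (X : Omega -> TX) (W : Omega -> TW) (Y : Omega -> R)
  (mX : measurable_fun setT X) (mW : measurable_fun setT W) (mY : measurable_fun setT Y)
  (Y2 : (expect P (fun w => (Y w ^+ 2)%R) < +oo)%E)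
  (n m : nat) (hn : (1 <= n)%N) (hm : (1 <= m)%N) (lambda : R) (hl : 0 <= lambda)
  (F : set (TX -> R)) (G : set (TX * TW -> R))
  (F0 : F !=set0) (FL2 : subL2 P X F) (Fcl : L2closed P X F) (Fcvx : fconvex F)
  (G0 : G !=set0)
  (GL2 : subL2 P (fun w => (X w, W w)) G)
  (Gcl : L2closed P (fun w => (X w, W w)) G) (Gcvx : fconvex G)
  (mu : TX -> R) (eta : TX * TW -> R)
  (hmu : is_cond_exp P X Y mu)
  (heta : is_cond_exp P (fun w => (X w, W w)) Y eta)
  (fstar : TX -> R) (gstar : TX * TW -> R)
  (Ffs : F fstar) (Ggs : G gstar) :
  let N := (n + m)%N in
  let Z := fun w => (X w, W w) in
  let loss := fun (f : TX -> R) (g : TX * TW -> R) =>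
    ((n%:R / N%:R)%:E * expect P (fun w => ((Y w - f (X w)) ^+ 2)%R)
     + (m%:R / N%:R)%:E * expect P (fun w => ((g (Z w) - f (X w)) ^+ 2)%R)
     + (lambda * (n%:R / N%:R))%:E * expect P (fun w => ((Y w - g (Z w)) ^+ 2)%R))%E in
  (forall f g, F f -> G g -> (loss fstar gstar <= loss f g)%E) ->
  let a := m%:R / (m%:R + n%:R * lambda) in
  let b := n%:R * lambda / (m%:R + n%:R * lambda) in
  (forall c : TX -> R, is_cond_exp P X (fun w => gstar (Z w)) c ->
     is_proj P X F (fun x => n%:R / N%:R * mu x + m%:R / N%:R * c x) fstar)
  /\ is_proj P Z G (fun z => a * fstar z.1 + b * eta z) gstar
  /\ (F mu -> G (fun z => mu z.1) -> G eta ->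
      {ae P, forall w, fstar (X w) = mu (X w)}
      /\ {ae P, forall w, gstar (Z w) = a * mu (X w) + b * eta (Z w)}).

Proof.
move=> N Z loss Hmin a b.
have mZ : measurable_fun setT Z by exact: measurable_fun_pair.
have NE : (N%:R : R) = n%:R + m%:R by rewrite /N natrD.
have n0 : (0 : R) < n%:R by rewrite ltr0n.
have m0 : (0 : R) < m%:R by rewrite ltr0n.
have N0 : (0 : R) < N%:R by rewrite NE addr_gt0.
have s0 : (0 : R) < m%:R + n%:R * lambda.
  have h1 : (0 : R) <= n%:R * lambda by rewrite mulr_ge0.
  lra.
have qE : m%:R / N%:R = 1 - n%:R / N%:R :> R.
  by rewrite NE; field; rewrite -NE gt_eqF.
have LY : L2 P Y := (L2E P Y mY).2 Y2.
have LF f : F f -> L2 P (fun w => f (X w)).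
  move=> Ff; case: (FL2 f Ff) => mf hf.
  exact: (L2E P _ (measurableT_comp mf mX)).2 hf.
have LG g : G g -> L2 P (fun w => g (Z w)).
  move=> Gg; case: (GL2 g Gg) => mg hg.
  exact: (L2E P _ (measurableT_comp mg mZ)).2 hg.
have lossE f g : F f -> G g -> loss f g =
   (n%:R / N%:R * ip P (fun w => Y w - f (X w)) (fun w => Y w - f (X w))
  + m%:R / N%:R * ip P (fun w => g (Z w) - f (X w)) (fun w => g (Z w) - f (X w))
  + lambda * (n%:R / N%:R) * ip P (fun w => Y w - g (Z w)) (fun w => Y w - g (Z w)))%:E.
  move=> Ff Gg; have Lf := LF f Ff; have Lg := LG g Gg.
  rewrite /loss !ip_sq; try exact: L2B.
  by rewrite -!EFinM -!EFinD.
case: (hmu) => mmu imu Hmu.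
case: (heta) => meta ieta Heta.
have LFs := LF fstar Ffs.
have LGs := LG gstar Ggs.
have mXA A : measurable A -> measurable (X @^-1` A).
  by move=> mA; rewrite -[_ @^-1` _]setTI; exact: mX.
have mZA A : measurable A -> measurable (Z @^-1` A).
  by move=> mA; rewrite -[_ @^-1` _]setTI; exact: mZ.
split.
  move=> c [mc ic Hc].
  pose h := fun x => n%:R / N%:R * mu x + m%:R / N%:R * c x.
  have mh : measurable_fun setT h.
    by apply: measurable_funD; apply: measurable_funM.
  split => // f Ff.
  have Lf := LF f Ff.
  have [Lh|Lh] := pselect (L2 P (fun w => h (X w))); last first.
    have mhf : measurable_fun setT (fun w => h (X w) - f (X w)).
      by apply: measurable_funB; [exact: measurableT_comp mh mX|exact: L2_meas Lf].
    case: (ltP (dist2 P X h f) +oo)%E => [lt|ge]; last exact: le_trans (leey _) ge.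
    exfalso; apply: Lh.
    have LD : L2 P (fun w => h (X w) - f (X w)) := (L2E P _ mhf).2 lt.
    have -> : (fun w => h (X w)) = (fun w => (h (X w) - f (X w)) + f (X w)).
      by apply/funext => w; rewrite subrK.
    exact: L2D.
  rewrite /dist2 !ip_sq; try exact: L2B.
  rewrite lee_fin.
  have H1 := Hmin f gstar Ff Ggs.
  rewrite !lossE // lee_fin in H1.
  have CE : ip P (fun w => f (X w) - fstar (X w))
      (fun w => n%:R / N%:R * Y w + m%:R / N%:R * gstar (Z w)) =
    ip P (fun w => f (X w) - fstar (X w)) (fun w => h (X w)).
    apply: (ce_ip P X mX _ h (fun x => f x - fstar x)) => //.
    - by apply: L2D; apply: L2Z.
    - by apply: measurable_funB; [case: (FL2 f Ff)|case: (FL2 fstar Ffs)].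
    - exact: L2B.
    - move=> A mA.
      rewrite (setint_lin P _ (mXA A mA)); [|exact: L2_int1|exact: L2_int1].
      rewrite /h (setint_lin P _ (mXA A mA) (fun w => mu (X w)) (fun w => c (X w))) //.
      by rewrite Hmu// Hc.
  rewrite ipBl // ?ipBl // in CE; try (by apply: L2D; apply: L2Z).
  rewrite (ipC P (fun w => f (X w)) (fun w => h (X w))) in CE.
  rewrite (ipC P (fun w => fstar (X w)) (fun w => h (X w))) in CE.
  rewrite !ipDr ?ipZr // in CE; try exact: L2Z.
  rewrite (ip_sub_sq P Y (fun w => fstar (X w))) // (ip_sub_sq P Y (fun w => f (X w))) // in H1.
  rewrite (ip_sub_sq P (fun w => gstar (Z w)) (fun w => fstar (X w))) // in H1.
  rewrite (ip_sub_sq P (fun w => gstar (Z w)) (fun w => f (X w))) // in H1.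
  rewrite (ip_sub_sq P (fun w => h (X w)) (fun w => fstar (X w))) //.
  rewrite (ip_sub_sq P (fun w => h (X w)) (fun w => f (X w))) //.
  rewrite (ipC P (fun w => f (X w)) Y) (ipC P (fun w => fstar (X w)) Y) in CE.
  rewrite (ipC P (fun w => f (X w)) (fun w => gstar (Z w))) in CE.
  rewrite (ipC P (fun w => fstar (X w)) (fun w => gstar (Z w))) in CE.
  rewrite qE in H1 CE.
  lra.
have bE : b = 1 - a.
  by rewrite /b /a; field; rewrite gt_eqF.
have mfs : measurable_fun setT fstar by case: (FL2 fstar Ffs).
split.
  pose h := fun z : TX * TW => a * fstar z.1 + b * eta z.
  have mh : measurable_fun setT h.
    apply: measurable_funD; apply: measurable_funM => //.
    exact: measurableT_comp mfs measurable_fst.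
  split => // g Gg.
  have Lg := LG g Gg.
  have mg : measurable_fun setT g by case: (GL2 g Gg).
  have mgs : measurable_fun setT gstar by case: (GL2 gstar Ggs).
  have [Lh|Lh] := pselect (L2 P (fun w => h (Z w))); last first.
    have mhf : measurable_fun setT (fun w => h (Z w) - g (Z w)).
      by apply: measurable_funB; [exact: measurableT_comp mh mZ|exact: L2_meas Lg].
    case: (ltP (dist2 P Z h g) +oo)%E => [lt|ge]; last exact: le_trans (leey _) ge.
    exfalso; apply: Lh.
    have LD : L2 P (fun w => h (Z w) - g (Z w)) := (L2E P _ mhf).2 lt.
    have -> : (fun w => h (Z w)) = (fun w => (h (Z w) - g (Z w)) + g (Z w)).
      by apply/funext => w; rewrite subrK.
    exact: L2D.
  rewrite /dist2 !ip_sq; try exact: L2B.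
  rewrite lee_fin.
  have H1 := Hmin fstar g Ffs Gg.
  rewrite !lossE // lee_fin in H1.
  have CE : ip P (fun w => g (Z w) - gstar (Z w))
      (fun w => a * fstar (X w) + b * Y w) =
    ip P (fun w => g (Z w) - gstar (Z w)) (fun w => h (Z w)).
    apply: (ce_ip P Z mZ _ h (fun z => g z - gstar z)) => //.
    - by apply: L2D; apply: L2Z.
    - exact: measurable_funB.
    - exact: L2B.
    - move=> A mA.
      rewrite (setint_lin P _ (mZA A mA)); [|exact: L2_int1|exact: L2_int1].
      rewrite (setint_lin P _ (mZA A mA) (fun w => fstar (X w)) (fun w => eta (Z w))) //.
      + by rewrite Heta.
      + exact: L2_int1.
  rewrite ipBl // ?ipBl // in CE; try (by apply: L2D; apply: L2Z).
  rewrite (ipC P (fun w => g (Z w)) (fun w => h (Z w))) in CE.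
  rewrite (ipC P (fun w => gstar (Z w)) (fun w => h (Z w))) in CE.
  rewrite !ipDr ?ipZr // in CE; try exact: L2Z.
  rewrite (ip_sub_sq P (fun w => gstar (Z w)) (fun w => fstar (X w))) // in H1.
  rewrite (ip_sub_sq P (fun w => g (Z w)) (fun w => fstar (X w))) // in H1.
  rewrite (ip_sub_sq P Y (fun w => gstar (Z w))) // (ip_sub_sq P Y (fun w => g (Z w))) // in H1.
  rewrite (ip_sub_sq P (fun w => h (Z w)) (fun w => gstar (Z w))) //.
  rewrite (ip_sub_sq P (fun w => h (Z w)) (fun w => g (Z w))) //.
  rewrite (ipC P (fun w => g (Z w)) Y) (ipC P (fun w => gstar (Z w)) Y) in CE.
  pose k := (m%:R + n%:R * lambda) / N%:R.
  have k0 : 0 < k by rewrite /k divr_gt0.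
  have qa : m%:R / N%:R = k * a.
    by rewrite /k /a; field; rewrite ?(gt_eqF N0) ?(gt_eqF s0).
  have lb : lambda * (n%:R / N%:R) = k * b.
    by rewrite /k /b; field; rewrite ?(gt_eqF N0) ?(gt_eqF s0).
  rewrite qa lb bE in H1.
  rewrite bE in CE.
  have CEk := congr1 (fun x => k * x) CE.
  rewrite -(ler_pM2l k0).
  simpl in CEk.
  lra.
move=> Fmu Gmu Geta.
have LM := LF mu Fmu.
have LE := LG eta Geta.
have mgs : measurable_fun setT gstar by case: (GL2 gstar Ggs).
pose g0 := fun z : TX * TW => a * mu z.1 + b * eta z.
have a0 : 0 <= a by rewrite /a divr_ge0// ltW.
have a1 : a <= 1.
  rewrite /a ler_pdivrMr// mul1r lerDl mulr_ge0//.
have Gg0 : G g0.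
  have := Gcvx (fun z => mu z.1) eta a Gmu Geta a0 a1.
  by rewrite -bE.
have H1 := Hmin mu g0 Fmu Gg0.
rewrite !lossE // lee_fin in H1.
pose u := fun w => fstar (X w) - mu (X w).
pose v := fun w => gstar (Z w) - (a * mu (X w) + b * eta (Z w)).
pose e := fun w => eta (Z w) - mu (X w).
pose r := fun w => Y w - eta (Z w).
have uE : u = fun w => fstar (X w) - mu (X w) by [].
have vE : v = fun w => gstar (Z w) - (a * mu (X w) + b * eta (Z w)) by [].
have Lu : L2 P u by exact: L2B.
have Lv : L2 P v by apply: L2B => //; apply: L2D; apply: L2Z.
have Le : L2 P e by exact: L2B.
have Lr : L2 P r by exact: L2B.
have Fi : ip P u Y = ip P u (fun w => mu (X w)).
  apply: (ce_ip P X mX Y mu (fun x => fstar x - mu x)) => //.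
  exact: measurable_funB.
have Fii : ip P v Y = ip P v (fun w => eta (Z w)).
  apply: (ce_ip P Z mZ Y eta (fun z => gstar z - (a * mu z.1 + b * eta z))) => //.
  apply: measurable_funB => //; apply: measurable_funD; apply: measurable_funM => //.
  exact: measurableT_comp mmu measurable_fst.
have Fiii : ip P u Y = ip P u (fun w => eta (Z w)).
  apply: (ce_ip P Z mZ Y eta (fun z => fstar z.1 - mu z.1)) => //.
  apply: measurable_funB; exact: measurableT_comp measurable_fst.
have ur : ip P r u = 0.
  by rewrite ipC /r ipBr // Fiii subrr.
have ue : ip P e u = 0.
  by rewrite ipC /e ipBr // -Fi Fiii subrr.
have vr : ip P r v = 0.
  by rewrite ipC /r ipBr // Fii subrr.
have E1 : (fun w => Y w - fstar (X w)) = (fun w => (r w + e w) - u w).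
  by apply/funext => w; rewrite /r /e /u; ring.
have E2 : (fun w => gstar (Z w) - fstar (X w)) = (fun w => b * e w + (v w - u w)).
  by apply/funext => w; rewrite /v /e /u bE; ring.
have E3 : (fun w => Y w - gstar (Z w)) = (fun w => (r w + a * e w) - v w).
  by apply/funext => w; rewrite /v /e /r bE; ring.
have E4 : (fun w => Y w - mu (X w)) = (fun w => r w + e w).
  by apply/funext => w; rewrite /r /e; ring.
have E5 : (fun w => g0 (Z w) - mu (X w)) = (fun w => b * e w).
  by apply/funext => w; rewrite /g0 /e bE /=; ring.
have E6 : (fun w => Y w - g0 (Z w)) = (fun w => r w + a * e w).
  by apply/funext => w; rewrite /g0 /e /r bE /=; ring.
rewrite E1 E2 E3 E4 E5 E6 in H1.
have Lvu : L2 P (fun w => v w - u w) by exact: L2B.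
have vu0 := ip_ge0 P (fun w => v w - u w).
have uu0 := ip_ge0 P u.
have vv0 := ip_ge0 P v.
clearbody u v e r.
rewrite (ip_sub_sq P v u) // in vu0.
rewrite !ipBl in H1; try solve [l2].
rewrite !ipDl in H1; try solve [l2].
rewrite !ipZl in H1; try solve [l2].
rewrite !ipBr in H1; try solve [l2].
rewrite !ipDr in H1; try solve [l2].
rewrite !ipZr in H1; try solve [l2].
rewrite ?ipNl in H1; try solve [l2].
rewrite ?ipNr in H1; try solve [l2].
rewrite ?(ipC P e r) ?(ipC P u r) ?(ipC P v r) ?(ipC P u e) ?(ipC P v e) ?(ipC P v u) in H1 vu0.
rewrite ?ur ?vr ?ue in H1.
have qbE : m%:R / N%:R * b = lambda * (n%:R / N%:R) * a.
  by rewrite /a /b; field; rewrite ?(gt_eqF N0) ?(gt_eqF s0).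
have X1 := congr1 (fun x => x * ip P e v) qbE; simpl in X1.
have p0 : 0 < n%:R / N%:R :> R by rewrite divr_gt0.
have q0 : 0 < m%:R / N%:R :> R by rewrite divr_gt0.
have lp0 : 0 <= lambda * (n%:R / N%:R) by rewrite mulr_ge0// ltW.
have P1 := mulr_ge0 (ltW p0) uu0.
have P2 := mulr_ge0 (ltW q0) vu0.
have P3 := mulr_ge0 lp0 vv0.
have Hu : n%:R / N%:R * ip P u u = 0 by lra.
have Hvu : m%:R / N%:R * (ip P v v - 2 * ip P u v + ip P u u) = 0 by lra.
move: Hu => /eqP; rewrite mulf_eq0 (gt_eqF p0) /= => /eqP uu.
move: Hvu => /eqP; rewrite mulf_eq0 (gt_eqF q0) /= => /eqP vu.
have ae1 := ip_eq0 P Lu uu.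
have vu' : ip P (fun w => v w - u w) (fun w => v w - u w) = 0.
  by rewrite ip_sub_sq // (ipC P v u).
have ae2 := ip_eq0 P Lvu vu'.
split.
  move: ae1; apply: filterS => w; rewrite uE /= => h1; lra.
apply: (@filterS2 _ _ _ _ _ _ _ ae1 ae2) => w; rewrite uE vE /= => h1 h2; lra.
Qed.
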